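(* If $G=\prod_{i=1}^tK[a_i,b_i]$ with $2\le b_1\le\cdots\le b_t$, then $$\mathrm{IR}(G)\le\frac1{b_1}\prod_{i=1}^ta_ib_i+\frac2{b_t}\prod_{i=1}^tb_i.$$
   Context: $K[a,b]$ is the balanced complete $b$-partite graph with $b$ parts of size $a$ (vertices adjacent iff in different parts); $\prod$ denotes the direct product of graphs ($(g_1,h_1)\sim(g_2,h_2)$ iff $g_1\sim g_2$ and $h_1\sim h_2$). A set $S$ is irredundant if every $v\in S$ has a private neighbor, i.e. a vertex in $N[v]\setminus N[S\setminus\{v\}]$ (closed neighborhoods). $\mathrm{IR}(G)$ is the maximum size of an irredundant set. *)

(* Defs.v *)
From HB Require Import structures.
From mathcomp Require Import all_boot all_order all_algebra.
Set Implicit Arguments. Unset Strict Implicit. Unset Printing Implicit Defensive.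

Definition cnbh (V : finType) (e : rel V) (v : V) : {set V} :=
  [set u | (u == v) || e v u].

Definition cnbhS (V : finType) (e : rel V) (S : {set V}) : {set V} :=
  \bigcup_(w in S) cnbh e w.

Definition irredundant (V : finType) (e : rel V) (S : {set V}) : bool :=
  [forall v in S, cnbh e v :\: cnbhS e (S :\ v) != set0].

Definition IR (V : finType) (e : rel V) : nat :=
  \max_(S : {set V} | irredundant e S) #|S|.

(* Vertices of the product of the K[a_i,b_i], i < n: a vertex has, in
   coordinate i, a pair (part in 'I_(b i), position in the part 'I_(a i)). *)
Definition prodK_vertex (n : nat) (a b : 'I_n -> nat) : finType :=
  {dffun forall i : 'I_n, ('I_(b i) * 'I_(a i))%type}.

Definition prodK_adj (n : nat) (a b : 'I_n -> nat) : rel (prodK_vertex a b) :=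
  fun f g => [forall i, (f i).1 != (g i).1].

(* Main.v *)
Require Import Defs.
From HB Require Import structures.
From mathcomp Require Import all_boot all_order all_algebra.
From mathcomp Require Import zify ring.
Set Implicit Arguments. Unset Strict Implicit. Unset Printing Implicit Defensive.
Lemma fiber_le2 (D : finType) (T : finType) (X : {set D}) (F : D -> T) :
  (forall p, #|[set x in X | F x == p]| <= 2) -> #|X| <= 2 * #|T|.
Proof.
move=> H.
rewrite -sum1_card (partition_big F predT) //=.
apply: (@leq_trans (\sum_(j : T) 2)); last by rewrite sum_nat_const mulnC.
apply: leq_sum => p _.
apply: leq_trans (H p).
rewrite -sum1_card.
by apply: eq_leq; apply: eq_bigl => x; rewrite !inE.
Qed.

Lemma card_parts (n : nat) (b : 'I_n -> nat) :
  #|{dffun forall i : 'I_n, 'I_(b i)}| = \prod_(i < n) b i.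
Proof.
rewrite card_dep_ffun foldrE big_map big_enum /=.
by apply: eq_bigr => i _; rewrite card_ord.
Qed.

Lemma card_vert (n : nat) (a b : 'I_n -> nat) :
  #|prodK_vertex a b| = \prod_(i < n) (a i * b i).
Proof.
rewrite card_dep_ffun foldrE big_map big_enum /=.
by apply: eq_bigr => i _; rewrite card_prod !card_ord mulnC.
Qed.
Section G.
Variables (n : nat) (a b : 'I_n.+1 -> nat).
Local Notation V := (prodK_vertex a b).
Local Notation e := (@prodK_adj n.+1 a b).

Lemma adj_sym (f g : V) : e f g = e g f.
Proof. by apply/forallP/forallP => H i; rewrite eq_sym H. Qed.

Lemma adj_irr (f : V) : ~~ e f f.
Proof. by apply/forallP => /(_ ord0); rewrite eqxx. Qed.

Lemma adj_parts (z w u : V) : (forall i, (z i).1 = (w i).1) -> e z u = e w u.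
Proof. by move=> H; apply/forallP/forallP => H' i; move: (H' i); rewrite H. Qed.

Lemma private_nb (S : {set V}) v : irredundant e S -> v \in S ->
  exists u, u \in cnbh e v /\ u \notin cnbhS e (S :\ v).
Proof.
move=> /forallP /(_ v) /implyP H vS; have := H vS.
case/set0Pn => u; rewrite inE => /andP [u1 u2]; by exists u.
Qed.

Definition S1 (S : {set V}) := [set v in S | [forall w in S, ~~ e v w]].

Lemma S2_private (S : {set V}) v : irredundant e S -> v \in S -> v \notin S1 S ->
  exists u, e v u /\ forall z, z \in S -> z != v -> (z != u) && ~~ e z u.
Proof.
move=> irr vS vS1; have [u [u1 u2]] := private_nb irr vS.
have Hz z : z \in S -> z != v -> (z != u) && ~~ e z u.
  move=> zS zv; rewrite -negb_or; apply/negP => H; apply: (negP u2).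
  apply/bigcupP; exists z; first by rewrite !inE zv.
  by rewrite inE eq_sym.
exists u; split => //.
move: u1; rewrite inE => /orP [/eqP uv|//]; subst u.
move: vS1; rewrite inE vS /= => /forallPn [w]; rewrite negb_imply negbK => /andP [wS evw].
have wv : w != v by apply: contraTneq evw => ->; rewrite adj_irr.
have := Hz w wS wv; by rewrite (adj_sym w v) evw andbF.
Qed.

Lemma S2_parts_inj (S : {set V}) v w : irredundant e S ->
  v \in S -> v \notin S1 S -> w \in S ->
  (forall i, (v i).1 = (w i).1) -> v = w.
Proof.
move=> irr vS vS1 wS H; apply/eqP; apply/negPn/negP => vw.
have [u [evu Hu]] := S2_private irr vS vS1.
have := Hu w wS; rewrite eq_sym vw => /(_ isT) /andP [_].
by rewrite -(adj_parts u H) evu.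
Qed.

Lemma S2_fiber (S : {set V}) v z w : irredundant e S ->
  v \in S -> v \notin S1 S -> z \in S -> z \notin S1 S -> w \in S ->
  z != v -> w != v ->
  (forall i, i != ord_max -> (v i).1 = (z i).1) ->
  (forall i, i != ord_max -> (v i).1 = (w i).1) -> z = w.
Proof.
move=> irr vS vS1 zS zS1 wS zv wv Hz Hw.
have [u [evu Hu]] := S2_private irr vS vS1.
have key y : y \in S -> y != v -> (forall i, i != ord_max -> (v i).1 = (y i).1) ->
   (y ord_max).1 = (u ord_max).1.
  move=> yS yv Hy; have /andP [_ /forallPn [i]] := Hu y yS yv.
  rewrite negbK => /eqP yu.
  case: (eqVneq i ord_max) yu => [-> //|im yu].
  by move/forallP: evu => /(_ i); rewrite Hy // yu eqxx.
apply: (S2_parts_inj irr zS zS1 wS) => i.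
case: (eqVneq i ord_max) => [->|im]; first by rewrite (key z) // (key w).
by rewrite -Hz // -Hw.
Qed.


Definition shiftv (v : V) (j : 'I_(b ord0)) : V :=
  @finfun _ (fun i => ('I_(b i) * 'I_(a i))%type)
    (fun i => (insubd (v i).1 (((v i).1 + j) %% b i), (v i).2)).

Lemma S1_bound (S : {set V}) : (forall i, 2 <= b i) -> (forall i, b ord0 <= b i) ->
  #|S1 S| * b ord0 <= #|V|.
Proof.
move=> hb2 hb0.
have -> : #|S1 S| * b ord0 = #|setX (S1 S) [set: 'I_(b ord0)]|.
  by rewrite cardsX cardsT card_ord.
rewrite -(@card_in_imset _ _ (fun x => shiftv x.1 x.2)); first exact: max_card.
move=> [v j] [v' j']; rewrite !inE /= !andbT => /andP [vS wf] /andP [vS' _].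
move=> E.
have Ei i : (((v i).1 + j) %% b i = ((v' i).1 + j') %% b i) /\ (v i).2 = (v' i).2.
  move: (congr1 (fun f : V => f i) E); rewrite !ffunE => -[E1 E2]; split => //.
  have bp : 0 < b i by apply: leq_trans (hb2 i).
  by move: (congr1 val E1); rewrite !val_insubd !ltn_pmod.
have jb i : j < b i by apply: leq_trans (ltn_ord j) (hb0 i).
have jb' i : j' < b i by apply: leq_trans (ltn_ord j') (hb0 i).
case: (eqVneq j j') => [jj|jj].
  subst j'; congr (_, _); apply/ffunP => i; have [E1 E2] := Ei i.
  rewrite [v i]surjective_pairing [v' i]surjective_pairing E2; congr (_, _); apply: val_inj => /=.
  by move/eqP: E1; rewrite eqn_modDr !modn_small // => /eqP.
exfalso.
have evv : prodK_adj v v'.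
  apply/forallP => i; apply/negP => /eqP vi; have [E1 _] := Ei i.
  move: E1; rewrite vi => /eqP; rewrite eqn_modDl !modn_small // => /eqP jj'.
  by move: jj; rewrite (val_inj jj') eqxx.
by move/forallP: wf => /(_ v'); rewrite vS' evv.
Qed.

Definition Fpart (x : V * 'I_(b ord_max)) : {dffun forall i : 'I_n.+1, 'I_(b i)} :=
  @finfun _ (fun i => 'I_(b i))
    (fun i => insubd (x.1 i).1 (if i == ord_max then val x.2 else val (x.1 i).1)).

Lemma valF x i : val (Fpart x i) = if i == ord_max then val x.2 else val (x.1 i).1.
Proof.
rewrite ffunE val_insubd; case: (eqVneq i ord_max) => [->|_] /=; last by rewrite ltn_ord.
by rewrite ltn_ord.
Qed.

Lemma S2_bound (S : {set V}) : irredundant e S ->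
  #|S :\: S1 S| * b ord_max <= 2 * \prod_(i < n.+1) b i.
Proof.
move=> irr.
have -> : #|S :\: S1 S| * b ord_max = #|setX (S :\: S1 S) [set: 'I_(b ord_max)]|.
  by rewrite cardsX cardsT card_ord.
rewrite -card_parts; apply: fiber_le2 => p.
rewrite leqNgt; apply/negP => /card_gt2P [[v j] [[w k] [[z l] [[]]]]].
rewrite !inE /= !andbT => /andP [/andP [vS1 vS] /eqP Fv] /andP [/andP [wS1 wS] /eqP Fw]
  /andP [/andP [zS1 zS] /eqP Fz] [d1 d2 d3].
have vals (y : V) (m : 'I_(b ord_max)) : Fpart (y, m) = p ->
    val m = val (p ord_max) /\ forall i, i != ord_max -> val (y i).1 = val (p i).
  move=> <-; split; first by rewrite valF eqxx.
  by move=> i im; rewrite valF (negbTE im).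
have {}vS1 : v \notin S1 S by rewrite inE.
have {}wS1 : w \notin S1 S by rewrite inE.
have {}zS1 : z \notin S1 S by rewrite inE.
have [jv Hv] := vals _ _ Fv; have [jw Hw] := vals _ _ Fw; have [jz Hz] := vals _ _ Fz.
have ej : j = k by apply: val_inj; rewrite jv jw.
have el : j = l by apply: val_inj; rewrite jv jz.
subst k l.
have wv : w != v by apply: contra d1 => /eqP ->.
have zv : z != v by apply: contra d3 => /eqP ->.
have := S2_fiber irr vS vS1 wS wS1 zS wv zv.
have agree (y : V) : (forall i, i != ord_max -> val (y i).1 = val (p i)) ->
    forall i, i != ord_max -> (v i).1 = (y i).1.
  by move=> Hy i im; apply: val_inj; rewrite Hv // Hy.
move=> /(_ (agree _ Hw) (agree _ Hz)) wz.
by move: d2; rewrite wz eqxx.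
Qed.

End G.
Import Order.TTheory GRing.Theory Num.Theory.
Local Open Scope ring_scope.
Theorem theorem5p4 (t : nat) (a b : 'I_t.+1 -> nat)
  (hb2 : forall i, (2 <= b i)%N)
  (hmono : forall i j : 'I_t.+1, (i <= j)%N -> (b i <= b j)%N) :
  ((IR (@prodK_adj t.+1 a b))%:R : rat)
    <= (\prod_(i < t.+1) (a i * b i))%N%:R / (b ord0)%:R
       + 2 * (\prod_(i < t.+1) b i)%N%:R / (b ord_max)%:R.
Proof.
set N := (\prod_(i < t.+1) (a i * b i))%N.
set B := (\prod_(i < t.+1) b i)%N.
have b0p : (0 < b ord0)%N by apply: leq_trans (hb2 _).
have bmp : (0 < b ord_max)%N by apply: leq_trans (hb2 _).
have key : (IR (@prodK_adj t.+1 a b) * (b ord0 * b ord_max) <= N * b ord_max + 2 * B * b ord0)%N.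
  rewrite /IR; apply: (big_ind (fun x => x * (b ord0 * b ord_max) <= N * b ord_max + 2 * B * b ord0)%N).
  - by rewrite mul0n.
  - move=> x y Hx Hy; rewrite /maxn; by case: ifP.
  move=> S irr.
  have h1 := S1_bound S hb2 (fun i => hmono ord0 i isT).
  rewrite card_vert -/N in h1.
  have h2 := S2_bound irr; rewrite -/B in h2.
  have eS : #|S| = (#|S1 S| + #|S :\: S1 S|)%N.
    have eI : S :&: S1 S = S1 S.
      by apply/setP => x; rewrite !inE; case: (x \in S).
    by rewrite -(cardsID (S1 S) S) eI.
  rewrite eS; nia.
have e1 : (N%:R / (b ord0)%:R + 2 * B%:R / (b ord_max)%:R : rat)
   = (N * b ord_max + 2 * B * b ord0)%N%:R / (b ord0 * b ord_max)%N%:R.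
  rewrite !natrD !natrM; field.
  by rewrite !pnatr_eq0 -!lt0n b0p bmp.
rewrite e1 ler_pdivlMr; last by rewrite ltr0n muln_gt0 b0p bmp.
by rewrite -natrM ler_nat.
Qed.
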